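(* Define $\varepsilon:\mathbb{N}\to(0,\infty)$ by $\varepsilon(n)=n^{-2}$ if $n=2^k$ for some $k\in\mathbb{N}$, and $\varepsilon(n)=n^{-3}$ otherwise. Then $\sum_{n\geq1}n\,\varepsilon(n)<+\infty$ and $\mathcal{U}(\varepsilon)=(0,1)\setminus\mathbb{Q}$.
   Context: For $\alpha\in(0,1)\setminus\mathbb{Q}$, let $\Delta^2$ be the closed unit bidisk, $\mathcal{P}_n$ the polynomials in $\mathbb{C}[z,w]$ of total degree at most $n$, $K=\{(e^z,e^{\alpha z}):|z|\leq1\}$, $E_n(\alpha)=\sup\{\sup_{\Delta^2}|P|:\ P\in\mathcal{P}_n,\ \sup_K|P|\leq1\}$, $e_n(\alpha)=\log E_n(\alpha)$, and $\mathcal{U}(\varepsilon)=\{\alpha\in(0,1)\setminus\mathbb{Q}:\ \limsup_{n\to\infty}\varepsilon(n)e_n(\alpha)=+\infty\}$. *)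

(* Defs.v *)
From Stdlib Require Import Reals Lra ZArith Classical ClassicalEpsilon.
Open Scope R_scope.

Definition C := (R * R)%type.
Definition Cadd (a b : C) : C := (fst a + fst b, snd a + snd b).
Definition Cmul (a b : C) : C :=
  (fst a * fst b - snd a * snd b, fst a * snd b + snd a * fst b).
Definition C0 : C := (0, 0).
Definition C1 : C := (1, 0).
Fixpoint Cpow (a : C) (n : nat) : C :=
  match n with O => C1 | S k => Cmul a (Cpow a k) end.
Definition Cnorm (a : C) : R := sqrt (fst a * fst a + snd a * snd a).
Definition Cscale (r : R) (a : C) : C := (r * fst a, r * snd a).
Definition Cexp (a : C) : C := (exp (fst a) * cos (snd a), exp (fst a) * sin (snd a)).
Fixpoint Csum (f : nat -> C) (n : nat) : C :=
  match n with O => C0 | S k => Cadd (Csum f k) (f k) end.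

(* A polynomial in C[z,w] is given by its coefficient array c i j (coefficient of z^i w^j). *)
Definition in_Pn (n : nat) (c : nat -> nat -> C) : Prop :=
  forall i j, (n < i + j)%nat -> c i j = C0.
Definition peval (n : nat) (c : nat -> nat -> C) (z w : C) : C :=
  Csum (fun i => Csum (fun j => Cmul (c i j) (Cmul (Cpow z i) (Cpow w j))) (S n)) (S n).

Definition in_bidisk (z w : C) : Prop := Cnorm z <= 1 /\ Cnorm w <= 1.
Definition in_K (alpha : R) (z w : C) : Prop :=
  exists u : C, Cnorm u <= 1 /\ z = Cexp u /\ w = Cexp (Cscale alpha u).

(* Extended-real supremum: Some l if the least upper bound exists, None (= +oo) otherwise. *)
Definition Esup (S : R -> Prop) : option R :=
  match excluded_middle_informative (exists l, is_lub S l) with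
  | left H => Some (proj1_sig (constructive_indefinite_description _ H))
  | right _ => None
  end.

(* E_n(alpha) = sup { sup_{Delta^2} |P| : P in P_n, sup_K |P| <= 1 }
   written as the supremum of the union of the values |P(z,w)|. *)
Definition En (alpha : R) (n : nat) : option R :=
  Esup (fun t => exists c : nat -> nat -> C,
          in_Pn n c /\
          (forall z w, in_K alpha z w -> Cnorm (peval n c z w) <= 1) /\
          exists z w, in_bidisk z w /\ t = Cnorm (peval n c z w)).

Definition en (alpha : R) (n : nat) : option R :=
  match En alpha n with Some E => Some (ln E) | None => None end.

Definition irrational (x : R) : Prop :=
  ~ exists p q : Z, q <> 0%Z /\ x = IZR p / IZR q.

Definition limsup_infty (eps : nat -> R) (alpha : R) : Prop :=
  forall (M : R) (N : nat), exists n : nat, (N <= n)%nat /\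
    match en alpha n with
    | None => True
    | Some e => eps n * e > M
    end.

Definition U (eps : nat -> R) (alpha : R) : Prop :=
  0 < alpha < 1 /\ irrational alpha /\ limsup_infty eps alpha.

Definition is_pow2 (n : nat) : Prop := exists k : nat, n = (2 ^ k)%nat.

Definition eps11 (n : nat) : R :=
  if excluded_middle_informative (is_pow2 n) then / (INR n ^ 2) else / (INR n ^ 3).

(* Main.v *)
From Stdlib Require Import Reals Lra Lia List FunctionalExtensionality Factorial FinFun Classical ClassicalEpsilon.
Require Import Defs.
Open Scope R_scope.

Lemma dl_ext f g x l l' : (forall y, f y = g y) -> l = l' ->
  derivable_pt_lim f x l -> derivable_pt_lim g x l'.
Proof.
  intros H1 H2 H3; subst l'.
  replace g with f by (apply functional_extensionality; auto). exact H3.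
Qed.

Lemma dl_plus f g x a b : derivable_pt_lim f x a -> derivable_pt_lim g x b ->
  derivable_pt_lim (fun y => f y + g y) x (a + b).
Proof. intros; exact (derivable_pt_lim_plus f g x a b H H0). Qed.
Lemma dl_minus f g x a b : derivable_pt_lim f x a -> derivable_pt_lim g x b ->
  derivable_pt_lim (fun y => f y - g y) x (a - b).
Proof. intros; exact (derivable_pt_lim_minus f g x a b H H0). Qed.
Lemma dl_mult f g x a b : derivable_pt_lim f x a -> derivable_pt_lim g x b ->
  derivable_pt_lim (fun y => f y * g y) x (a * g x + f x * b).
Proof. intros; exact (derivable_pt_lim_mult f g x a b H H0). Qed.
Lemma dl_id x : derivable_pt_lim (fun y => y) x 1.
Proof. exact (derivable_pt_lim_id x). Qed.
Lemma dl_const c x : derivable_pt_lim (fun _ => c) x 0.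
Proof. exact (derivable_pt_lim_const c x). Qed.
Lemma dl_lin c x : derivable_pt_lim (fun y => y * c) x c.
Proof.
  eapply dl_ext; [intro; reflexivity| |apply dl_mult; [apply dl_id|apply dl_const]].
  simpl; ring.
Qed.
Lemma dl_comp f g x a b : derivable_pt_lim f x a -> derivable_pt_lim g (f x) b ->
  derivable_pt_lim (fun y => g (f y)) x (b * a).
Proof. intros; exact (derivable_pt_lim_comp f g x a b H H0). Qed.
Lemma dl_exp_lin c x : derivable_pt_lim (fun y => exp (y * c)) x (exp (x * c) * c).
Proof. apply (dl_comp (fun y => y * c) exp). apply dl_lin. apply derivable_pt_lim_exp. Qed.
Lemma dl_cos_lin c x : derivable_pt_lim (fun y => cos (y * c)) x (- sin (x * c) * c).
Proof. apply (dl_comp (fun y => y * c) cos). apply dl_lin. apply derivable_pt_lim_cos. Qed.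
Lemma dl_sin_lin c x : derivable_pt_lim (fun y => sin (y * c)) x (cos (x * c) * c).
Proof. apply (dl_comp (fun y => y * c) sin). apply dl_lin. apply derivable_pt_lim_sin. Qed.

Lemma rolle0 F F' a b : (forall x, derivable_pt_lim F x (F' x)) -> a < b ->
  F a = 0 -> F b = 0 -> exists c, a < c < b /\ F' c = 0.
Proof.
  intros HD Hab Ha Hb.
  pose (pr := fun x (_ : a < x < b) => exist _ (F' x) (HD x) : derivable_pt F x).
  destruct (Rolle F a b pr) as [c [P Hc]].
  - intros x _. apply derivable_continuous_pt. exists (F' x). apply HD.
  - exact Hab.
  - congruence.
  - exists c. split; [exact P|]. rewrite <- Hc. symmetry. apply derive_pt_eq_0. apply HD.
Qed.

Lemma list_max (l : list R) : l <> nil -> exists x, In x l /\ forall y, In y l -> y <= x.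
Proof.
  induction l as [|a l IH]; intros H; [congruence|].
  destruct l as [|b l].
  - exists a. split; [left; auto|]. intros y [->|[]]. lra.
  - destruct IH as [x [Hx Hm]]; [discriminate|].
    destruct (Rle_dec a x).
    + exists x. split; [right; auto|]. intros y [<-|Hy]; auto.
    + exists a. split; [left; auto|]. intros y [<-|Hy]; [lra|]. specialize (Hm y Hy); lra.
Qed.

Lemma zeros_step F F' (HD : forall x, derivable_pt_lim F x (F' x)) :
  forall k (l : list R) a b, length l = S k -> NoDup l ->
  (forall x, In x l -> a <= x <= b /\ F x = 0) ->
  exists l', NoDup l' /\ length l' = k /\ (forall x, In x l' -> a <= x <= b /\ F' x = 0).
Proof.
  induction k as [|k IH]; intros l a b Hlen Hnd Hz.
  - exists nil. split; [constructor|split; [reflexivity|intros x0 []]].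
  - assert (Hne : l <> nil) by (intro; subst; discriminate).
    destruct (list_max l Hne) as [x0 [Hx Hm]].
    destruct (in_split x0 l Hx) as [l1 [l2 Hl]]. subst l.
    assert (Hnd0 := NoDup_remove_1 _ _ _ Hnd).
    assert (Hni := NoDup_remove_2 _ _ _ Hnd).
    assert (Hlen0 : length (l1 ++ l2) = S k).
    { rewrite length_app in *. simpl in Hlen. lia. }
    assert (Hne0 : l1 ++ l2 <> nil) by (intro H; rewrite H in Hlen0; discriminate).
    destruct (list_max (l1 ++ l2) Hne0) as [y [Hy Hym]].
    assert (Hlt : forall z, In z (l1 ++ l2) -> z < x0).
    { intros z Hz0. assert (z <= x0) by (apply Hm; apply in_app_or in Hz0; apply in_or_app;
        destruct Hz0; [left|right; right]; auto).
      destruct (Req_dec z x0); [subst; contradiction|lra]. }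
    assert (Hin : forall z, In z (l1 ++ l2) -> In z (l1 ++ x0 :: l2)).
    { intros z Hz0; apply in_app_or in Hz0; apply in_or_app; destruct Hz0; [left|right;right]; auto. }
    destruct (IH (l1 ++ l2) a y Hlen0 Hnd0) as [l' [Hnd' [Hlen' Hz']]].
    { intros z Hz0. destruct (Hz z (Hin z Hz0)). split; [split; [lra|apply Hym; auto]|auto]. }
    assert (Hyx := Hlt y Hy).
    destruct (rolle0 F F' y x0 HD Hyx) as [c [Hc Hc0]].
    { apply (Hz y (Hin y Hy)). }
    { apply (Hz x0 Hx). }
    exists (c :: l'). split; [|split].
    + constructor; auto. intros Hc'. destruct (Hz' c Hc'). lra.
    + simpl; lia.
    + intros z [<-|Hz0].
      * destruct (Hz y (Hin y Hy)) as [[? ?] _]. destruct (Hz x0 Hx) as [[? ?] _].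
        split; [lra|auto].
      * destruct (Hz' z Hz0) as [[? ?] ?]. destruct (Hz y (Hin y Hy)) as [[? ?] _].
        split; [lra|auto].
Qed.

Definition tower (D : nat -> R -> R) := forall s x0, derivable_pt_lim (D s) x0 (D (S s) x0).

Lemma zeros_iter D (HT : tower D) : forall k j (l : list R) a b, length l = S k -> NoDup l ->
  (forall x0, In x0 l -> a <= x0 <= b /\ D j x0 = 0) ->
  exists xi, a <= xi <= b /\ D (j + k)%nat xi = 0.
Proof.
  induction k as [|k IH]; intros j l a b Hlen Hnd Hz.
  - destruct l as [|x0 l]; [discriminate|]. exists x0. rewrite Nat.add_0_r. apply Hz. left; auto.
  - destruct (zeros_step (D j) (D (S j)) (HT j) (S k) l a b Hlen Hnd Hz) as [l' [H1 [H2 H3]]].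
    destruct (IH (S j) l' a b H2 H1 H3) as [xi Hxi]. exists xi.
    replace (j + S k)%nat with (S j + k)%nat by lia. exact Hxi.
Qed.

Fixpoint ptw (x : R) (l : list R) (s : nat) (t : R) : R :=
  match l with
  | nil => match s with O => 1 | S _ => 0 end
  | y :: l' => if Req_EM_T y x then ptw x l' s t
               else (t - y) * ptw x l' s t + INR s * ptw x l' (pred s) t
  end.

Fixpoint cnt (x : R) (l : list R) : nat :=
  match l with
  | nil => O
  | y :: l' => if Req_EM_T y x then cnt x l' else S (cnt x l')
  end.

Lemma ptw_tower x l : tower (ptw x l).
Proof.
  induction l as [|y l IH]; intros s t; simpl.
  - destruct s; apply dl_const.
  - destruct (Req_EM_T y x).
    + apply IH.
    + eapply dl_ext; [intro; reflexivity| |].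
      2:{ apply dl_plus. apply dl_mult. apply dl_minus. apply dl_id. apply dl_const. apply IH.
          apply dl_mult. apply dl_const. apply IH. }
      destruct s as [|s]; simpl pred; rewrite ?S_INR; simpl INR; ring.
Qed.

Lemma ptw_high x l : forall s t, (cnt x l < s)%nat -> ptw x l s t = 0.
Proof.
  induction l as [|y l IH]; intros s t Hs; simpl in *.
  - destruct s; [lia|auto].
  - destruct (Req_EM_T y x).
    + apply IH; auto.
    + rewrite IH by lia. rewrite IH by lia. ring.
Qed.

Lemma ptw_top x l t : ptw x l (cnt x l) t = INR (fact (cnt x l)).
Proof.
  induction l as [|y l IH]; simpl.
  - reflexivity.
  - destruct (Req_EM_T y x).
    + apply IH.
    + rewrite ptw_high by lia. simpl pred. rewrite IH.
      change (fact (S (cnt x l))) with (S (cnt x l) * fact (cnt x l))%nat. rewrite mult_INR, S_INR. ring.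
Qed.

Lemma ptw_zero x l z : In z l -> z <> x -> ptw x l 0 z = 0.
Proof.
  induction l as [|y l IH]; intros Hz Hzx; simpl in *; [contradiction|].
  destruct (Req_EM_T y x).
  - destruct Hz as [<-|Hz]; [congruence|auto].
  - destruct Hz as [<-|Hz].
    + simpl. ring.
    + rewrite IH by auto. simpl. ring.
Qed.

Lemma ptw_nz x l : ptw x l 0 x <> 0.
Proof.
  induction l as [|y l IH]; simpl.
  - lra.
  - destruct (Req_EM_T y x); auto.
    simpl. rewrite Rmult_0_l, Rplus_0_r. apply Rmult_integral_contrapositive. split; auto.
    intro; apply n; lra.
Qed.

Lemma cnt_notin x l : ~ In x l -> cnt x l = length l.
Proof.
  induction l as [|y l IH]; intros H; simpl; auto.
  destruct (Req_EM_T y x).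
  - exfalso; apply H; left; auto.
  - rewrite IH; auto. intro; apply H; right; auto.
Qed.

Lemma cnt_in x l : NoDup l -> In x l -> S (cnt x l) = length l.
Proof.
  induction l as [|y l IH]; intros Hnd H; simpl in *; [contradiction|].
  inversion Hnd; subst.
  destruct (Req_EM_T y x).
  - subst. rewrite cnt_notin; auto.
  - destruct H as [H|H]; [congruence|]. rewrite IH; auto.
Qed.

Definition lsum {A} (F : A -> R) (l : list A) : R := fold_right (fun a acc => F a + acc) 0 l.

Lemma lsum_ext_in {A} (F G : A -> R) l : (forall x, In x l -> F x = G x) -> lsum F l = lsum G l.
Proof.
  induction l as [|a l IH]; intros H; simpl; auto.
  rewrite H by (left; auto). rewrite IH; auto. intros; apply H; right; auto.
Qed.

Lemma lsum_scal {A} (F : A -> R) c l : lsum (fun x => F x * c) l = lsum F l * c.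
Proof. induction l; simpl; [ring|rewrite IHl; ring]. Qed.

Lemma lsum_zero {A} (F : A -> R) l : (forall x, In x l -> F x = 0) -> lsum F l = 0.
Proof.
  induction l as [|a l IH]; intros H; simpl; auto.
  rewrite H by (left; auto). rewrite IH; [ring|]. intros; apply H; right; auto.
Qed.

Lemma lsum_app {A} (F : A -> R) l1 l2 : lsum F (l1 ++ l2) = lsum F l1 + lsum F l2.
Proof. induction l1; simpl; [ring|rewrite IHl1; ring]. Qed.

Lemma lsum_map {A B} (F : B -> R) (f : A -> B) l : lsum F (map f l) = lsum (fun x => F (f x)) l.
Proof. induction l; simpl; auto. rewrite IHl; auto. Qed.

Lemma lsum_single (F : R -> R) l z : NoDup l -> In z l ->
  (forall x, In x l -> x <> z -> F x = 0) -> lsum F l = F z.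
Proof.
  induction l as [|y l IH]; intros Hnd Hz H; simpl in *; [contradiction|].
  inversion Hnd; subst.
  destruct (Req_dec y z).
  - subst. rewrite lsum_zero; [ring|]. intros x Hx. apply H; auto. intro; subst; contradiction.
  - destruct Hz as [Hz|Hz]; [congruence|].
    rewrite H by (auto). rewrite IH; auto. ring.
Qed.

Lemma lsum_dl (W : R -> R) L M s t :
  derivable_pt_lim (fun t => lsum (fun x => W x * ptw x L s t) M) t
     (lsum (fun x => W x * ptw x L (S s) t) M).
Proof.
  induction M as [|y M IH]; simpl.
  - apply dl_const.
  - eapply dl_ext; [intro; reflexivity| |].
    2:{ apply dl_plus; [|apply IH]. apply dl_mult. apply dl_const. apply ptw_tower. }
    simpl; ring.
Qed.

Theorem ddmvt D (HT : tower D) L a b : NoDup L -> L <> nil -> (forall x, In x L -> a <= x <= b) ->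
  exists xi, a <= xi <= b /\
    D (pred (length L)) xi = INR (fact (pred (length L))) * lsum (fun x => D 0%nat x / ptw x L 0 x) L.
Proof.
  intros Hnd Hne Hab.
  set (H := fun s t => D s t - lsum (fun x => D 0%nat x / ptw x L 0 x * ptw x L s t) L).
  assert (HTH : tower H).
  { intros s t. unfold H. apply dl_minus. apply HT. apply lsum_dl. }
  assert (Hlen : length L = S (pred (length L))).
  { destruct L; [congruence|reflexivity]. }
  destruct (zeros_iter H HTH (pred (length L)) 0 L a b Hlen Hnd) as [xi [Hxi Hz]].
  { intros z Hz. split; [auto|]. unfold H.
    rewrite (lsum_single _ L z Hnd Hz).
    - field. apply ptw_nz.
    - intros x Hx Hxz. rewrite (ptw_zero x L z); auto. ring. }
  exists xi. split; auto. simpl in Hz. unfold H in Hz.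
  rewrite (lsum_ext_in _ (fun x => D 0%nat x / ptw x L 0 x * INR (fact (pred (length L))))) in Hz.
  - rewrite lsum_scal in Hz. lra.
  - intros x Hx. f_equal. replace (pred (length L)) with (cnt x L).
    + apply ptw_top.
    + rewrite <- (cnt_in x L Hnd Hx). reflexivity.
Qed.

Lemma exp_le x y : x <= y -> exp x <= exp y.
Proof. intros [H|H]; [left; apply exp_increasing; auto|subst; lra]. Qed.

Definition Dre (ux uy : R) (s : nat) (t : R) : R :=
  exp (t * ux) * (fst (Cpow (ux, uy) s) * cos (t * uy) - snd (Cpow (ux, uy) s) * sin (t * uy)).
Definition Dim (ux uy : R) (s : nat) (t : R) : R :=
  exp (t * ux) * (fst (Cpow (ux, uy) s) * sin (t * uy) + snd (Cpow (ux, uy) s) * cos (t * uy)).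

Lemma Dre_tower ux uy : tower (Dre ux uy).
Proof.
  intros s t. unfold Dre. eapply dl_ext; [intro; reflexivity| |].
  2:{ apply dl_mult. apply dl_exp_lin. apply dl_minus; apply dl_mult; try apply dl_const.
      apply dl_cos_lin. apply dl_sin_lin. }
  simpl. ring.
Qed.

Lemma Dim_tower ux uy : tower (Dim ux uy).
Proof.
  intros s t. unfold Dim. eapply dl_ext; [intro; reflexivity| |].
  2:{ apply dl_mult. apply dl_exp_lin. apply dl_plus; apply dl_mult; try apply dl_const.
      apply dl_sin_lin. apply dl_cos_lin. }
  simpl. ring.
Qed.

Lemma Cpow_bound ux uy s : Rabs ux <= 1 -> Rabs uy <= 1 ->
  Rabs (fst (Cpow (ux, uy) s)) + Rabs (snd (Cpow (ux, uy) s)) <= 2 ^ s.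
Proof.
  intros Hx Hy. induction s as [|s IH]; simpl.
  - rewrite Rabs_R1, Rabs_R0. lra.
  - set (A := fst (Cpow (ux, uy) s)) in *. set (B := snd (Cpow (ux, uy) s)) in *.
    unfold Rminus. 
    pose proof (Rabs_triang (ux * A) (- (uy * B))).
    pose proof (Rabs_triang (ux * B) (uy * A)).
    rewrite Rabs_Ropp in H. rewrite !Rabs_mult in H, H0.
    pose proof (Rabs_pos A). pose proof (Rabs_pos B). pose proof (Rabs_pos ux). pose proof (Rabs_pos uy).
    assert (Rabs ux * Rabs A <= Rabs A) by nra.
    assert (Rabs uy * Rabs B <= Rabs B) by nra.
    assert (Rabs ux * Rabs B <= Rabs B) by nra.
    assert (Rabs uy * Rabs A <= Rabs A) by nra.
    lra.
Qed.

Lemma trig_bound A B c s : -1 <= c <= 1 -> -1 <= s <= 1 -> Rabs (A * c - B * s) <= Rabs A + Rabs B.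
Proof.
  intros Hc Hs. unfold Rminus. eapply Rle_trans; [apply Rabs_triang|].
  rewrite Rabs_Ropp, !Rabs_mult.
  assert (Rabs c <= 1) by (apply Rabs_le; lra). assert (Rabs s <= 1) by (apply Rabs_le; lra).
  pose proof (Rabs_pos A). pose proof (Rabs_pos B). pose proof (Rabs_pos c). pose proof (Rabs_pos s).
  nra.
Qed.

Lemma trig_bound2 A B c s : -1 <= c <= 1 -> -1 <= s <= 1 -> Rabs (A * s + B * c) <= Rabs A + Rabs B.
Proof.
  intros Hc Hs. eapply Rle_trans; [apply Rabs_triang|].
  rewrite !Rabs_mult.
  assert (Rabs c <= 1) by (apply Rabs_le; lra). assert (Rabs s <= 1) by (apply Rabs_le; lra).
  pose proof (Rabs_pos A). pose proof (Rabs_pos B). pose proof (Rabs_pos c). pose proof (Rabs_pos s).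
  nra.
Qed.

Lemma Dre_bound ux uy s t N : Rabs ux <= 1 -> Rabs uy <= 1 -> 0 <= t <= N ->
  Rabs (Dre ux uy s t) <= exp N * 2 ^ s.
Proof.
  intros Hx Hy Ht. unfold Dre. rewrite Rabs_mult, Rabs_pos_eq by (left; apply exp_pos).
  apply Rmult_le_compat; [left; apply exp_pos|apply Rabs_pos| |].
  - apply exp_le. assert (Rabs (t * ux) <= t).
    { rewrite Rabs_mult, Rabs_pos_eq by lra. nra. }
    pose proof (Rle_abs (t * ux)). lra.
  - eapply Rle_trans; [apply trig_bound; [apply COS_bound|apply SIN_bound]|].
    apply Cpow_bound; auto.
Qed.

Lemma Dim_bound ux uy s t N : Rabs ux <= 1 -> Rabs uy <= 1 -> 0 <= t <= N ->
  Rabs (Dim ux uy s t) <= exp N * 2 ^ s.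
Proof.
  intros Hx Hy Ht. unfold Dim. rewrite Rabs_mult, Rabs_pos_eq by (left; apply exp_pos).
  apply Rmult_le_compat; [left; apply exp_pos|apply Rabs_pos| |].
  - apply exp_le. assert (Rabs (t * ux) <= t).
    { rewrite Rabs_mult, Rabs_pos_eq by lra. nra. }
    pose proof (Rle_abs (t * ux)). lra.
  - eapply Rle_trans; [apply trig_bound2; [apply COS_bound|apply SIN_bound]|].
    apply Cpow_bound; auto.
Qed.

Lemma Cpow_real a s : Cpow (a, 0) s = (a ^ s, 0).
Proof.
  induction s; simpl; auto. rewrite IHs. unfold Cmul; simpl. f_equal; ring.
Qed.

Lemma Cmul_Cexp v1 v2 : Cmul (Cexp v1) (Cexp v2) = Cexp (Cadd v1 v2).
Proof.
  destruct v1 as [a b]; destruct v2 as [c d]. unfold Cmul, Cexp, Cadd; simpl.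
  rewrite exp_plus, cos_plus, sin_plus. f_equal; ring.
Qed.

Lemma Cpow_Cexp v i : Cpow (Cexp v) i = Cexp (Cscale (INR i) v).
Proof.
  induction i as [|i IH].
  - destruct v; unfold Cexp, Cscale; simpl. rewrite !Rmult_0_l, exp_0, cos_0, sin_0.
    unfold C1. f_equal; ring.
  - simpl Cpow. rewrite IH, Cmul_Cexp. f_equal. rewrite S_INR. destruct v; unfold Cadd, Cscale; simpl.
    f_equal; ring.
Qed.

Lemma Cnorm_le p : Cnorm p <= Rabs (fst p) + Rabs (snd p).
Proof.
  unfold Cnorm. destruct p as [a b]; simpl.
  rewrite <- (sqrt_Rsqr (Rabs a + Rabs b)) by (pose proof (Rabs_pos a); pose proof (Rabs_pos b); lra).
  apply sqrt_le_1_alt. unfold Rsqr.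
  pose proof (pow2_abs a). pose proof (pow2_abs b).
  pose proof (Rabs_pos a). pose proof (Rabs_pos b). simpl in *. nra.
Qed.

Lemma Cnorm_ge p : Rabs (fst p) <= Cnorm p.
Proof.
  unfold Cnorm. destruct p as [a b]; simpl.
  rewrite <- sqrt_Rsqr_abs. apply sqrt_le_1_alt. unfold Rsqr. nra.
Qed.

Lemma Cnorm_le1 u : Cnorm u <= 1 -> Rabs (fst u) <= 1 /\ Rabs (snd u) <= 1.
Proof.
  destruct u as [a b]; unfold Cnorm; simpl. intros H.
  assert (a * a + b * b <= 1).
  { assert (0 <= a * a + b * b) by nra.
    rewrite <- (sqrt_sqrt (a*a+b*b)) by auto. pose proof (sqrt_pos (a*a+b*b)). nra. }
  assert (0 <= a * a) by nra. assert (0 <= b * b) by nra.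
  assert (Rabs a * Rabs a = a * a) by (rewrite <- Rabs_mult; apply Rabs_pos_eq; nra).
  assert (Rabs b * Rabs b = b * b) by (rewrite <- Rabs_mult; apply Rabs_pos_eq; nra).
  pose proof (Rabs_pos a); pose proof (Rabs_pos b).
  split; nra.
Qed.

Definition lam (al : R) (p : nat * nat) : R := INR (fst p) + al * INR (snd p).
Definition Pn (a : nat) := list_prod (seq 0 (S a)) (seq 0 (S a)).
Definition Ln al a := map (lam al) (Pn a).
Definition cr al a sc (i j : nat) : R :=
  if andb (Nat.leb i a) (Nat.leb j a)
  then sc / ptw (lam al (i,j)) (Ln al a) 0 (lam al (i,j)) else 0.
Definition coef al a sc (i j : nat) : C := (cr al a sc i j, 0).

Lemma Csum_fst f N : fst (Csum f N) = lsum (fun i => fst (f i)) (seq 0 N).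
Proof.
  induction N; [reflexivity|]. cbn [Csum]. rewrite seq_S, lsum_app, <- IHN. simpl. ring.
Qed.
Lemma Csum_snd f N : snd (Csum f N) = lsum (fun i => snd (f i)) (seq 0 N).
Proof.
  induction N; [reflexivity|]. cbn [Csum]. rewrite seq_S, lsum_app, <- IHN. simpl. ring.
Qed.

Lemma lsum_prod {A B} (h : A * B -> R) l1 l2 :
  lsum h (list_prod l1 l2) = lsum (fun i => lsum (fun j => h (i, j)) l2) l1.
Proof.
  induction l1; simpl; auto. rewrite lsum_app, lsum_map, IHl1. reflexivity.
Qed.

Lemma lsum_seq_cut a (h : nat -> R) : (forall k, (a < k)%nat -> h k = 0) ->
  lsum h (seq 0 (S (2 * a))) = lsum h (seq 0 (S a)).
Proof.
  intros H. replace (S (2 * a)) with (S a + a)%nat by lia.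
  rewrite seq_app, lsum_app. rewrite (lsum_zero h (seq (0 + S a) a)); [apply Rplus_0_r|].
  intros k Hk. apply in_seq in Hk. apply H. lia.
Qed.

Lemma lsum_scal_l {A} (F : A -> R) c l : lsum (fun x => c * F x) l = c * lsum F l.
Proof. induction l; simpl; [ring|rewrite IHl; ring]. Qed.

Lemma sum_rel al a sc (Phi : R -> R) :
  lsum (fun i => lsum (fun j => cr al a sc i j * Phi (lam al (i,j))) (seq 0 (S (2*a)))) (seq 0 (S (2*a)))
  = sc * lsum (fun x => Phi x / ptw x (Ln al a) 0 x) (Ln al a).
Proof.
  unfold Ln at 2. rewrite lsum_map. unfold Pn. rewrite lsum_prod.
  rewrite lsum_seq_cut.
  2:{ intros k Hk. apply lsum_zero. intros j _. unfold cr.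
      replace (Nat.leb k a) with false by (symmetry; apply Nat.leb_gt; lia). simpl. ring. }
  rewrite <- lsum_scal_l. apply lsum_ext_in. intros i Hi. apply in_seq in Hi.
  rewrite lsum_seq_cut.
  2:{ intros k Hk. unfold cr.
      replace (Nat.leb k a) with false by (symmetry; apply Nat.leb_gt; lia).
      rewrite Bool.andb_false_r. ring. }
  rewrite <- lsum_scal_l. apply lsum_ext_in. intros j Hj. apply in_seq in Hj.
  unfold cr. replace (Nat.leb i a) with true by (symmetry; apply Nat.leb_le; lia).
  replace (Nat.leb j a) with true by (symmetry; apply Nat.leb_le; lia). simpl.
  unfold Rdiv; ring.
Qed.

Lemma scale_eq al i j ux uy :
  Cadd (Cscale (INR i) (ux, uy)) (Cscale (INR j) (Cscale al (ux, uy))) = Cscale (lam al (i, j)) (ux, uy).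
Proof. unfold Cadd, Cscale, lam; simpl. f_equal; ring. Qed.

Lemma peval_fst al a sc ux uy :
  fst (peval (2*a) (coef al a sc) (Cexp (ux,uy)) (Cexp (Cscale al (ux,uy)))) =
  lsum (fun i => lsum (fun j => cr al a sc i j * (exp (lam al (i,j) * ux) * cos (lam al (i,j) * uy)))
     (seq 0 (S (2*a)))) (seq 0 (S (2*a))).
Proof.
  unfold peval. rewrite Csum_fst. apply lsum_ext_in. intros i _.
  rewrite Csum_fst. apply lsum_ext_in. intros j _.
  rewrite !Cpow_Cexp, Cmul_Cexp, scale_eq. unfold coef, Cmul, Cexp, Cscale; simpl. ring.
Qed.

Lemma peval_snd al a sc ux uy :
  snd (peval (2*a) (coef al a sc) (Cexp (ux,uy)) (Cexp (Cscale al (ux,uy)))) =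
  lsum (fun i => lsum (fun j => cr al a sc i j * (exp (lam al (i,j) * ux) * sin (lam al (i,j) * uy)))
     (seq 0 (S (2*a)))) (seq 0 (S (2*a))).
Proof.
  unfold peval. rewrite Csum_snd. apply lsum_ext_in. intros i _.
  rewrite Csum_snd. apply lsum_ext_in. intros j _.
  rewrite !Cpow_Cexp, Cmul_Cexp, scale_eq. unfold coef, Cmul, Cexp, Cscale; simpl. ring.
Qed.

Lemma NoDup_prod {A B} (l1 : list A) (l2 : list B) : NoDup l1 -> NoDup l2 -> NoDup (list_prod l1 l2).
Proof.
  induction l1 as [|x l1 IH]; intros H1 H2; simpl; [constructor|].
  inversion H1; subst. apply NoDup_app.
  - apply Injective_map_NoDup; auto. intros y1 y2 H; congruence.
  - apply IH; auto.
  - intros p Hp Hp'. apply in_map_iff in Hp. destruct Hp as [y [<- _]].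
    apply in_prod_iff in Hp'. tauto.
Qed.

Lemma lam_inj al : irrational al -> Injective (lam al).
Proof.
  intros Hirr [i j] [i' j'] H. unfold lam in H; simpl in H.
  destruct (Nat.eq_dec j j') as [->|Hj].
  - assert (INR i = INR i') by lra. apply INR_eq in H0. subst; auto.
  - exfalso. apply Hirr. exists (Z.of_nat i - Z.of_nat i')%Z, (Z.of_nat j' - Z.of_nat j)%Z.
    split; [lia|]. rewrite !minus_IZR, <- !INR_IZR_INZ.
    assert (INR j' - INR j <> 0).
    { intro H0. apply Hj. apply INR_eq. lra. }
    field_simplify_eq; auto. lra.
Qed.

Lemma Ln_NoDup al a : irrational al -> NoDup (Ln al a).
Proof.
  intros H. apply Injective_map_NoDup. apply lam_inj; auto. apply NoDup_prod; apply seq_NoDup.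
Qed.

Lemma Ln_len al a : length (Ln al a) = (S a * S a)%nat.
Proof. unfold Ln, Pn. rewrite length_map, length_prod, length_seq. reflexivity. Qed.

Lemma Ln_bound al a : 0 < al < 1 -> forall x, In x (Ln al a) -> 0 <= x <= INR (2 * a).
Proof.
  intros Hal x Hx. unfold Ln, Pn in Hx. apply in_map_iff in Hx. destruct Hx as [[i j] [<- Hp]].
  apply in_prod_iff in Hp. destruct Hp as [Hi Hj]. apply in_seq in Hi, Hj.
  unfold lam; simpl. pose proof (pos_INR i). pose proof (pos_INR j).
  assert (INR i <= INR a) by (apply le_INR; lia). assert (INR j <= INR a) by (apply le_INR; lia).
  split; [nra|]. assert (al * INR j <= INR j) by nra. rewrite !plus_INR. simpl (INR 0). lra.
Qed.

Lemma Dre0 ux uy t : Dre ux uy 0 t = exp (t * ux) * cos (t * uy).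
Proof. unfold Dre; simpl. ring. Qed.
Lemma Dim0 ux uy t : Dim ux uy 0 t = exp (t * ux) * sin (t * uy).
Proof. unfold Dim; simpl. ring. Qed.

Lemma half_bound D S1 m N : D = INR (fact m) * S1 -> Rabs D <= exp N * 2 ^ m ->
  Rabs (INR (fact m) / (2 ^ S m * exp N) * S1) <= / 2.
Proof.
  intros HD HB. pose proof (INR_fact_neq_0 m). pose proof (exp_pos N).
  assert (0 < 2 ^ m) by (apply pow_lt; lra).
  replace (INR (fact m) / (2 ^ S m * exp N) * S1) with (D * / (2 ^ S m * exp N))
    by (subst; simpl; field; lra).
  rewrite Rabs_mult, (Rabs_pos_eq (/ _)).
  2:{ left; apply Rinv_0_lt_compat. simpl. nra. }
  apply Rle_trans with (exp N * 2 ^ m * / (2 ^ S m * exp N)).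
  - apply Rmult_le_compat_r; auto. left; apply Rinv_0_lt_compat. simpl. nra.
  - simpl. right. field. lra.
Qed.

Lemma low_bound D S1 m N R0 : D = INR (fact m) * S1 -> R0 ^ m * exp (- N * R0) <= Rabs D ->
  R0 ^ m * exp (- N * R0) / (2 ^ S m * exp N) <= Rabs (INR (fact m) / (2 ^ S m * exp N) * S1).
Proof.
  intros HD HB. pose proof (INR_fact_neq_0 m). pose proof (exp_pos N).
  assert (0 < 2 ^ m) by (apply pow_lt; lra).
  replace (INR (fact m) / (2 ^ S m * exp N) * S1) with (D * / (2 ^ S m * exp N))
    by (subst; simpl; field; lra).
  rewrite Rabs_mult, (Rabs_pos_eq (/ _)).
  2:{ left; apply Rinv_0_lt_compat. simpl. nra. }
  unfold Rdiv. apply Rmult_le_compat_r; auto. left; apply Rinv_0_lt_compat. simpl. nra.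
Qed.

Lemma peval_fst2 al a sc ux uy :
  fst (peval (2*a) (coef al a sc) (Cexp (ux,uy)) (Cexp (Cscale al (ux,uy)))) =
  sc * lsum (fun x => exp (x * ux) * cos (x * uy) / ptw x (Ln al a) 0 x) (Ln al a).
Proof. rewrite peval_fst. exact (sum_rel al a sc (fun x => exp (x * ux) * cos (x * uy))). Qed.
Lemma peval_snd2 al a sc ux uy :
  snd (peval (2*a) (coef al a sc) (Cexp (ux,uy)) (Cexp (Cscale al (ux,uy)))) =
  sc * lsum (fun x => exp (x * ux) * sin (x * uy) / ptw x (Ln al a) 0 x) (Ln al a).
Proof. rewrite peval_snd. exact (sum_rel al a sc (fun x => exp (x * ux) * sin (x * uy))). Qed.

Lemma key al a R0 : 0 < al < 1 -> irrational al -> 0 <= R0 ->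
  exists c, in_Pn (2*a) c /\ (forall z w, in_K al z w -> Cnorm (peval (2*a) c z w) <= 1) /\
  exists z w, in_bidisk z w /\
    R0 ^ (pred (S a * S a)) * exp (- INR (2*a) * R0) / (2 ^ S (pred (S a * S a)) * exp (INR (2*a)))
      <= Cnorm (peval (2*a) c z w).
Proof.
  intros Hal Hirr HR.
  set (m := pred (S a * S a)). set (N := INR (2 * a)).
  set (sc := INR (fact m) / (2 ^ S m * exp N)).
  assert (HL := Ln_NoDup al a Hirr).
  assert (Hne : Ln al a <> nil).
  { intro H. pose proof (Ln_len al a). rewrite H in H0. simpl in H0. discriminate. }
  assert (Hb := Ln_bound al a Hal).
  assert (Hm : pred (length (Ln al a)) = m) by (rewrite Ln_len; reflexivity).
  exists (coef al a sc). split; [|split].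
  - intros i j Hij. unfold coef, cr.
    destruct (Nat.leb i a) eqn:E1; destruct (Nat.leb j a) eqn:E2; simpl; try reflexivity.
    apply Nat.leb_le in E1, E2. lia.
  - intros z w [[ux uy] [Hu [-> ->]]].
    destruct (Cnorm_le1 _ Hu) as [Hx Hy]; simpl in Hx, Hy.
    eapply Rle_trans; [apply Cnorm_le|].
    rewrite peval_fst2, peval_snd2.
    destruct (ddmvt (Dre ux uy) (Dre_tower ux uy) (Ln al a) 0 N HL Hne Hb) as [xi [Hxi Hxe]].
    destruct (ddmvt (Dim ux uy) (Dim_tower ux uy) (Ln al a) 0 N HL Hne Hb) as [yi [Hyi Hye]].
    rewrite Hm in Hxe, Hye.
    rewrite (lsum_ext_in (fun x => Dre ux uy 0 x / _) (fun x => exp (x * ux) * cos (x * uy) / ptw x (Ln al a) 0 x)) in Hxe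
      by (intros; rewrite Dre0; reflexivity).
    rewrite (lsum_ext_in (fun x => Dim ux uy 0 x / _) (fun x => exp (x * ux) * sin (x * uy) / ptw x (Ln al a) 0 x)) in Hye
      by (intros; rewrite Dim0; reflexivity).
    assert (H1 := half_bound _ _ m N Hxe (Dre_bound ux uy m xi N Hx Hy Hxi)).
    assert (H2 := half_bound _ _ m N Hye (Dim_bound ux uy m yi N Hx Hy Hyi)).
    unfold sc. lra.
  - exists (Cexp (- R0, 0)), (Cexp (Cscale al (- R0, 0))). split.
    + split; (eapply Rle_trans; [apply Cnorm_le|]); unfold Cexp, Cscale; simpl;
        rewrite ?Rmult_0_r, cos_0, sin_0, Rmult_1_r, Rmult_0_r, Rabs_R0, Rplus_0_r,
          Rabs_pos_eq by (left; apply exp_pos); rewrite <- exp_0; apply exp_le; nra.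
    + eapply Rle_trans; [|apply Cnorm_ge].
      rewrite peval_fst2.
      destruct (ddmvt (Dre (- R0) 0) (Dre_tower (- R0) 0) (Ln al a) 0 N HL Hne Hb) as [xi [Hxi Hxe]].
      rewrite Hm in Hxe.
      rewrite (lsum_ext_in (fun x => Dre (- R0) 0 0 x / _)
         (fun x => exp (x * - R0) * cos (x * 0) / ptw x (Ln al a) 0 x)) in Hxe
        by (intros; rewrite Dre0; reflexivity).
      apply (low_bound _ _ m N R0 Hxe).
      unfold Dre. rewrite Cpow_real. simpl fst; simpl snd.
      rewrite Rmult_0_r, cos_0, sin_0, Rmult_1_r, Rmult_0_l, Rminus_0_r.
      rewrite Rabs_mult, Rabs_pos_eq by (left; apply exp_pos).
      rewrite <- RPow_abs, Rabs_Ropp, Rabs_pos_eq by auto.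
      assert (exp (- N * R0) <= exp (xi * - R0)) by (apply exp_le; nra).
      pose proof (pow_le R0 m HR). nra.
Qed.

Lemma INR_S_pos k : 0 < INR (S k).
Proof. apply lt_0_INR; lia. Qed.

Definition ind (k : nat) : R :=
  if excluded_middle_informative (is_pow2 (S k)) then / INR (S k) else 0.

Lemma term_bound k : INR (S k) * eps11 (S k) <= / INR (S k) ^ 2 + ind k.
Proof.
  pose proof (INR_S_pos k). unfold eps11, ind.
  destruct (excluded_middle_informative (is_pow2 (S k))).
  - replace (INR (S k) * / INR (S k) ^ 2) with (/ INR (S k)) by (field; lra).
    assert (0 < / INR (S k) ^ 2) by (apply Rinv_0_lt_compat; nra). lra.
  - replace (INR (S k) * / INR (S k) ^ 3) with (/ INR (S k) ^ 2) by (field; lra). lra.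
Qed.

Lemma term_pos k : 0 < INR (S k) * eps11 (S k).
Proof.
  pose proof (INR_S_pos k). unfold eps11.
  destruct (excluded_middle_informative (is_pow2 (S k))); apply Rmult_lt_0_compat; auto;
    apply Rinv_0_lt_compat; apply pow_lt; auto.
Qed.

Lemma sq_sum N : sum_f_R0 (fun k => / INR (S k) ^ 2) N <= 2 - / INR (S N).
Proof.
  induction N.
  - simpl. lra.
  - rewrite tech5; cbv beta. pose proof (INR_S_pos N). rewrite (S_INR (S N)).
    assert (/ (INR (S N) + 1) ^ 2 <= / INR (S N) - / (INR (S N) + 1)).
    { apply Rle_trans with (/ (INR (S N) * (INR (S N) + 1))).
      - apply Rinv_le_contravar; nra.
      - right; field; lra. }
    lra.
Qed.

Lemma ind_sum : forall N k, (S N < 2 ^ k)%nat -> sum_f_R0 ind N <= 2 - 2 / 2 ^ k.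
Proof.
  induction N; intros k Hk.
  - simpl. unfold ind. destruct (excluded_middle_informative (is_pow2 1)) as [_|n].
    2:{ exfalso; apply n; exists 0%nat; reflexivity. }
    destruct k as [|k]; [simpl in Hk; lia|].
    simpl. assert (1 <= 2 ^ k) by (apply pow_R1_Rle; lra).
    simpl INR. replace (2 / (2 * 2 ^ k)) with (/ 2 ^ k) by (field; lra).
    assert (/ 2 ^ k <= 1). { rewrite <- Rinv_1. apply Rinv_le_contravar; lra. }
    rewrite Rinv_1. lra.
  - rewrite tech5. unfold ind at 2.
    destruct (excluded_middle_informative (is_pow2 (S (S N)))) as [[j Hj]|n].
    + assert (Hjk : (j < k)%nat).
      { apply (Nat.pow_lt_mono_r_iff 2); lia. }
      assert (HIH := IHN j ltac:(lia)).
      rewrite Hj, pow_INR. simpl (INR 2).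
      assert (0 < 2 ^ j) by (apply pow_lt; lra).
      assert (2 * 2 ^ j <= 2 ^ k).
      { change (2 * 2 ^ j) with (2 ^ S j). apply Rle_pow; [lra|lia]. }
      assert (2 / 2 ^ k <= / 2 ^ j).
      { apply Rle_trans with (2 / (2 * 2 ^ j)).
        - unfold Rdiv. apply Rmult_le_compat_l; [lra|]. apply Rinv_le_contravar; lra.
        - right; field; lra. }
      replace (2 / 2 ^ j) with (2 * / 2 ^ j) in HIH by reflexivity. replace (1 + 1) with 2 by ring. lra.
    + assert (HIH := IHN k ltac:(lia)). lra.
Qed.

Lemma part1 : exists l : R, Un_cv (fun N => sum_f_R0 (fun k => INR (S k) * eps11 (S k)) N) l.
Proof.
  destruct (growing_cv (fun N => sum_f_R0 (fun k => INR (S k) * eps11 (S k)) N)) as [l Hl].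
  - intro n. rewrite tech5. pose proof (term_pos (S n)). lra.
  - exists 4. intros x [N ->].
    apply Rle_trans with (sum_f_R0 (fun k => / INR (S k) ^ 2 + ind k) N).
    + apply sum_Rle. intros; apply term_bound.
    + rewrite plus_sum. pose proof (sq_sum N). pose proof (INR_S_pos N).
      assert (S N < 2 ^ S N)%nat by (apply Nat.pow_gt_lin_r; lia).
      pose proof (ind_sum N (S N) H1).
      assert (0 < / INR (S N)) by (apply Rinv_0_lt_compat; auto).
      assert (0 <= 2 / 2 ^ S N). { unfold Rdiv. apply Rmult_le_pos; [lra|]. left; apply Rinv_0_lt_compat, pow_lt; lra. }
      lra.
  - exists l; exact Hl.
Qed.

Lemma exp_pow c k : exp c ^ k = exp (INR k * c).
Proof.
  induction k; simpl pow. - simpl. rewrite Rmult_0_l, exp_0. reflexivity.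
  - rewrite IHk, S_INR, <- exp_plus. f_equal. ring.
Qed.

Lemma ln_le' x y : 0 < x -> x <= y -> ln x <= ln y.
Proof. intros Hx [H|H]; [left; apply ln_increasing; auto|subst; lra]. Qed.

Lemma limsup_main al : 0 < al < 1 -> irrational al -> limsup_infty eps11 al.
Proof.
  intros Hal Hirr M N0.
  set (M' := Rmax M 0). set (c := 4 * M' + 4). set (R0 := 2 * exp c).
  assert (HM1 : M <= M') by apply Rmax_l. assert (HM2 : 0 <= M') by apply Rmax_r.
  assert (HR0 : 0 < R0) by (unfold R0; pose proof (exp_pos c); lra).
  destruct (INR_unbounded (R0 + 1)) as [K HK].
  set (j := Nat.max N0 K). set (a := (2 ^ j)%nat). set (n := (2 * a)%nat).
  assert (Hja : (j < a)%nat) by (apply Nat.pow_gt_lin_r; lia).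
  exists n. split; [unfold n, j in *; lia|].
  destruct (key al a R0 Hal Hirr (Rlt_le _ _ HR0)) as [cc [Hp [HKb [z [w [Hbd Hlow]]]]]].
  unfold en, En, Esup.
  destruct (excluded_middle_informative _) as [H|H]; [|trivial].
  destruct (constructive_indefinite_description _ H) as [E HE]. simpl.
  assert (HtE : Cnorm (peval (2 * a) cc z w) <= E).
  { apply (proj1 HE). exists cc. split; auto. split; auto. exists z, w. split; auto. }
  unfold eps11. destruct (excluded_middle_informative (is_pow2 n)) as [_|Hn].
  2:{ exfalso; apply Hn. exists (S j). unfold n, a. rewrite Nat.pow_succ_r'. reflexivity. }
  set (A := INR a).
  assert (HA : A > R0 + 1).
  { unfold A. apply Rlt_le_trans with (INR K); [lra|]. apply le_INR. unfold j in Hja. lia. }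
  set (m := pred (S a * S a)) in *.
  assert (Hm : INR m = A * A + 2 * A).
  { unfold m, A. replace (pred (S a * S a)) with (a * a + 2 * a)%nat by nia.
    rewrite plus_INR, !mult_INR. simpl. ring. }
  assert (HN : INR n = 2 * A) by (unfold n, A; rewrite mult_INR; reflexivity).
  fold n in Hlow, HtE.
  set (T := R0 ^ m * exp (- INR n * R0) / (2 ^ S m * exp (INR n))) in *.
  set (X := INR m * c - INR n * R0 - INR n).
  assert (HT : exp (X - 1) <= T).
  { unfold T, X, R0. rewrite Rpow_mult_distr, exp_pow.
    replace (INR m * c - INR n * (2 * exp c) - INR n - 1) with
      (INR m * c + (- INR n * (2 * exp c)) + (- INR n) + (-1)) by ring.
    rewrite !exp_plus, !exp_Ropp.
    pose proof (exp_pos (INR m * c)). pose proof (exp_pos (- INR n * (2 * exp c))).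
    pose proof (exp_pos (INR n)). pose proof (exp_pos 1).
    assert (2 < exp 1) by (pose proof (exp_ineq1 1 ltac:(lra)); lra).
    assert (0 < 2 ^ m) by (apply pow_lt; lra).
    replace (2 ^ m * exp (INR m * c) * exp (- INR n * (2 * exp c)) / (2 ^ S m * exp (INR n)))
      with (exp (INR m * c) * exp (- INR n * (2 * exp c)) * / exp (INR n) * / 2)
      by (simpl; field; lra).
    apply Rmult_le_compat_l.
    - apply Rmult_le_pos; [apply Rmult_le_pos; lra|]. left; apply Rinv_0_lt_compat; lra.
    - replace (exp (-1)) with (/ exp 1) by (rewrite <- exp_Ropp; f_equal; ring).
      apply Rinv_le_contravar; lra. }
  assert (HX : X - 1 > M * INR n ^ 2).
  { unfold X. rewrite Hm, HN. unfold c.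
    assert (0 < A) by lra.
    assert (M * (A * A) <= M' * (A * A)) by (apply Rmult_le_compat_r; nra).
    nra. }
  assert (HlnE : ln E > M * INR n ^ 2).
  { assert (ln (exp (X - 1)) <= ln E).
    { apply ln_le'; [apply exp_pos|lra]. }
    rewrite ln_exp in H0. lra. }
  assert (Hn2 : 0 < INR n ^ 2) by (rewrite HN; nra).
  apply Rmult_lt_reg_l with (INR n ^ 2); auto.
  rewrite <- Rmult_assoc, Rinv_r by lra. lra.
Qed.

Theorem mainTheorem11 :
  (exists l : R, Un_cv (fun N => sum_f_R0 (fun k => INR (S k) * eps11 (S k)) N) l) /\
  (forall alpha : R, U eps11 alpha <-> (0 < alpha < 1 /\ irrational alpha)).
Proof.
  split; [apply part1|].
  intros alpha. unfold U. split.
  - intros [H1 [H2 _]]. auto.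
  - intros [H1 H2]. split; auto. split; auto. apply limsup_main; auto.
Qed.
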